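(* Let $B$ be a regular ROBP of length $n$ and width $w$, where $n\ge2$ is a power of $2$, with random walk matrices $\mathbf{M}_i$ and $\mathbf{M}_{\ell..r}$ as in the context. Let $0<\gamma<1/2$ and $\varepsilon^{(i)}=\frac{\gamma^{i+1}}{10(i+1)^2\log(n)}$ for integers $i\ge0$. For every $(\ell,r)\in\mathsf{BS}_n$ let $\mathbf{M}^{(0)}_{\ell..r}$ be an $(\varepsilon^{(0)}/3)$-SV approximation of $\mathbf{M}_{\ell..r}$, and define $\mathbf{M}^{(k)}_{\ell..r}$ by the recursion in the context. Then for every integer $k\ge0$ and every $(\ell,r)\in\mathsf{BS}_n$, $\mathbf{M}^{(k)}_{\ell..r}$ is a $C_t\varepsilon^{(k)}$-SV approximation of $\mathbf{M}_{\ell..r}$, where $t=\log(r-\ell)$ and $C_t=(1+1/\log(n))^t/3$.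
   Context: Logarithms are base $2$. A ROBP of length $n$ and width $w$ is given by transition functions $B_i:[w]\times\{0,1\}\to[w]$, $i\in[n]$; it is regular if for every $i$ every $v\in[w]$ has exactly two preimages $(u,b)$ under $B_i$. $\mathbf{M}_i(b)[u,v]=1$ if $B_i(u,b)=v$ and $0$ otherwise; $\mathbf{M}_i=\frac12(\mathbf{M}_i(0)+\mathbf{M}_i(1))$ (doubly stochastic by regularity); $\mathbf{M}_{\ell..r}=\prod_{i=\ell+1}^r\mathbf{M}_i$. $\mathsf{BS}_n=\{(\ell,r):\exists i,k\ge 0,\ \ell=i2^k,\ r=\ell+2^k,\ 0\le\ell<r\le n\}$. Recursion: for $(\ell,r)\in\mathsf{BS}_n$ with $r-\ell=1$ and $k\ge1$, $\mathbf{M}^{(k)}_{\ell..r}=\mathbf{M}_r$; for $r-\ell\ge2$ and $k\ge1$, with $m=(\ell+r)/2$, $\mathbf{M}^{(k)}_{\ell..r}=\sum_{i+j=k}\mathbf{M}^{(i)}_{\ell..m}\mathbf{M}^{(j)}_{m..r}-\sum_{i+j=k-1}\mathbf{M}^{(i)}_{\ell..m}\mathbf{M}^{(j)}_{m..r}$ (sums over integers $i,j\ge0$). For $\mathbf{A}\in\mathbb{R}^{w\times w}$, $y\in\mathbb{R}^w$, let $D(\mathbf{A},y)=\|y\|_2^2-\|\mathbf{A}y\|_2^2$. For a doubly stochastic $\mathbf{W}$, a (not necessarily stochastic) matrix $\widetilde{\mathbf{W}}$ is an $\varepsilon$-SV approximation of $\mathbf{W}$ if for all $x,y\in\mathbb{R}^w$,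 $|x^\top(\widetilde{\mathbf{W}}-\mathbf{W})y|\le\varepsilon\cdot\frac{D(\mathbf{W}^\top,x)+D(\mathbf{W},y)}{2}$. *)

(* Defs.v *)
From HB Require Import structures.
From mathcomp Require Import all_boot all_order all_algebra.
From mathcomp Require Import reals.
Set Implicit Arguments. Unset Strict Implicit. Unset Printing Implicit Defensive.
Import Order.TTheory GRing.Theory Num.Theory.
Local Open Scope ring_scope.

Section ROBP.
Variable R : realType.
Variable w : nat.

Definition regular_robp (n : nat) (B : nat -> 'I_w -> bool -> 'I_w) : Prop :=
  forall i, (1 <= i <= n)%N -> forall v : 'I_w,
    #|[set ub : 'I_w * bool | B i ub.1 ub.2 == v]| = 2%N.

Definition Mb (B : nat -> 'I_w -> bool -> 'I_w) (i : nat) (b : bool) : 'M[R]_w :=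
  \matrix_(u, v) (if B i u b == v then 1 else 0).

Definition Mi (B : nat -> 'I_w -> bool -> 'I_w) (i : nat) : 'M[R]_w :=
  2^-1 *: (Mb B i false + Mb B i true).

(* M_{l..r} = M_{l+1} M_{l+2} ... M_r *)
Definition Mlr (B : nat -> 'I_w -> bool -> 'I_w) (l r : nat) : 'M[R]_w :=
  foldr (fun i A => Mi B i.+1 *m A) 1%:M (iota l (r - l)).

Definition in_BS (n l r : nat) : Prop :=
  exists i k : nat, l = (i * 2 ^ k)%N /\ r = (l + 2 ^ k)%N /\ (l < r <= n)%N.

Definition sqnorm (y : 'cV[R]_w) : R := \sum_(j < w) (y j 0) ^+ 2.

Definition Dfun (A : 'M[R]_w) (y : 'cV[R]_w) : R := sqnorm y - sqnorm (A *m y).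

Definition sv_approx (eps : R) (W Wt : 'M[R]_w) : Prop :=
  forall x y : 'cV[R]_w,
    `|(x^T *m (Wt - W) *m y) 0 0| <= eps * ((Dfun W^T x + Dfun W y) / 2).

End ROBP.

(* Main.v *)
Require Import Defs.
From HB Require Import structures.
From mathcomp Require Import all_boot all_order all_algebra.
From mathcomp Require Import reals.
From mathcomp Require Import sequences exp.
Import Order.TTheory GRing.Theory Num.Theory.
Local Open Scope ring_scope.
From mathcomp Require Import ring lra zify.

Section Aux.
Variable R : realType.
Variable w : nat.
Implicit Types (A W E F : 'M[R]_w) (x y z : 'cV[R]_w).

Definition bf x A y : R := (x^T *m A *m y) 0 0.

Lemma bfD x A1 A2 y : bf x (A1 + A2) y = bf x A1 y + bf x A2 y.
Proof. by rewrite /bf mulmxDr mulmxDl mxE. Qed.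

Lemma bfN x A y : bf x (- A) y = - bf x A y.
Proof. by rewrite /bf mulmxN mulNmx mxE. Qed.

Lemma bfB x A1 A2 y : bf x (A1 - A2) y = bf x A1 y - bf x A2 y.
Proof. by rewrite bfD bfN. Qed.

Lemma bf_sum x y (I : finType) (F : I -> 'M[R]_w) :
  bf x (\sum_i F i) y = \sum_i bf x (F i) y.
Proof.
elim/big_rec2: _ => [|i a B _ <-]; first by rewrite /bf mulmx0 mul0mx mxE.
by rewrite bfD.
Qed.

Lemma bf_mulr x A1 A2 y : bf x (A1 *m A2) y = bf x A1 (A2 *m y).
Proof. by rewrite /bf !mulmxA. Qed.

Lemma bf_mull x A1 A2 y : bf x (A1 *m A2) y = bf (A1^T *m x) A2 y.
Proof. by rewrite /bf trmx_mul trmxK !mulmxA. Qed.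

Lemma sqnorm_ge0 z : 0 <= sqnorm z.
Proof. by rewrite /sqnorm; apply: sumr_ge0 => j _; rewrite sqr_ge0. Qed.

Lemma bf_self E y : bf ((E *m y)) E y = sqnorm (E *m y).
Proof.
rewrite /bf /sqnorm -mulmxA mxE; apply: eq_bigr => j _.
by rewrite mxE expr2.
Qed.

Lemma sqnormZ c z : sqnorm (c *: z) = c ^+ 2 * sqnorm z.
Proof.
rewrite /sqnorm mulr_sumr; apply: eq_bigr => j _.
by rewrite mxE exprMn.
Qed.

Lemma DfunZ A c z : Dfun A (c *: z) = c ^+ 2 * Dfun A z.
Proof. by rewrite /Dfun -scalemxAr !sqnormZ mulrBr. Qed.

Lemma Dfun_le A z : Dfun A z <= sqnorm z.
Proof. by rewrite /Dfun lerBlDr lerDl sqnorm_ge0. Qed.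

Lemma Dfun_mul A1 A2 y : Dfun (A1 *m A2) y = Dfun A2 y + Dfun A1 (A2 *m y).
Proof. rewrite /Dfun -mulmxA; ring. Qed.

Lemma Dfun_trmul A1 A2 x :
  Dfun (A1 *m A2)^T x = Dfun A1^T x + Dfun A2^T (A1^T *m x).
Proof. by rewrite trmx_mul Dfun_mul addrC. Qed.


Lemma wcs (I : finType) (p a : I -> R) :
  (forall i, 0 <= p i) -> \sum_i p i <= 1 ->
  (\sum_i p i * a i) ^+ 2 <= \sum_i p i * a i ^+ 2.
Proof.
move=> p0 P1.
set S := \sum_i p i * a i; set P := \sum_i p i; set Q := \sum_i p i * a i ^+ 2.
have H : 0 <= \sum_i p i * (a i - S) ^+ 2.
  by apply: sumr_ge0 => i _; rewrite mulr_ge0 // sqr_ge0.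
have E : \sum_i p i * (a i - S) ^+ 2 = Q - 2 * S * S + S ^+ 2 * P.
  rewrite (eq_bigr (fun i => (p i * a i ^+ 2 - 2 * S * (p i * a i)) + S ^+ 2 * p i)); last first.
    by move=> i _; ring.
  by rewrite big_split sumrB /= -!mulr_sumr.
rewrite E in H.
have S2 : 0 <= S ^+ 2 by rewrite sqr_ge0.
have P0 : 0 <= S ^+ 2 * (1 - P) by rewrite mulr_ge0 // subr_ge0.
rewrite expr2 in S2 P0 H *; nra.
Qed.

Lemma contraction (M : 'M[R]_w) y :
  (forall u v, 0 <= M u v) ->
  (forall u, \sum_v M u v <= 1) -> (forall v, \sum_u M u v <= 1) ->
  0 <= Dfun M y.
Proof.
move=> M0 Rs Cs; rewrite /Dfun subr_ge0 /sqnorm.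
apply: (le_trans (y := \sum_j \sum_v M j v * y v 0 ^+ 2)).
  apply: ler_sum => j _; rewrite mxE; exact: wcs.
rewrite exchange_big /=; apply: ler_sum => v _.
rewrite -mulr_suml; rewrite -[X in _ <= X]mul1r; apply: ler_wpM2r => //.
exact: sqr_ge0.
Qed.

Lemma contractionT (M : 'M[R]_w) y :
  (forall u v, 0 <= M u v) ->
  (forall u, \sum_v M u v <= 1) -> (forall v, \sum_u M u v <= 1) ->
  0 <= Dfun M^T y.
Proof.
move=> M0 Rs Cs; apply: contraction => [u v|u|v]; rewrite ?mxE //.
- by under eq_bigr do rewrite mxE.
- by under eq_bigr do rewrite mxE.
Qed.


Variable B : nat -> 'I_w -> bool -> 'I_w.

Lemma Mi_ge0 i u v : 0 <= Mi R B i u v.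
Proof. by rewrite /Mi /Mb !mxE; case: eqP; case: eqP => _ _; lra. Qed.

Lemma sum_ind (b : 'I_w) : \sum_(v : 'I_w) (if b == v then 1 else 0 : R) = 1.
Proof.
rewrite (bigD1 b) //= eqxx big1 ?addr0 // => v /negbTE; by rewrite eq_sym => ->.
Qed.

Lemma Mi_row i u : \sum_v Mi R B i u v = 1.
Proof.
rewrite /Mi /Mb; under eq_bigr do rewrite !mxE.
by rewrite -mulr_sumr big_split /= !sum_ind; lra.
Qed.

Lemma Mi_col n i v : regular_robp n B -> (1 <= i <= n)%N -> \sum_u Mi R B i u v = 1.
Proof.
move=> reg hi; have := reg i hi v => c2.
rewrite /Mi /Mb; under eq_bigr do rewrite !mxE.
rewrite -mulr_sumr.
have -> : \sum_(u : 'I_w) ((if B i u false == v then 1 else 0) + (if B i u true == v then 1 else 0) : R)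
   = \sum_(p : 'I_w * bool) (if B i p.1 p.2 == v then 1 else 0).
  rewrite -(pair_bigA _ (fun u b => if B i u b == v then 1 else 0 : R)) /=.
  by apply: eq_bigr => u _; rewrite big_bool /= addrC.
rewrite -big_mkcond /= sumr_const.
have -> : #|[pred p : 'I_w * bool | B i p.1 p.2 == v]| = 2%N.
  by rewrite -c2; apply: eq_card => p; rewrite inE.
lra.
Qed.


Definition fstep := fun i (A : 'M[R]_w) => Mi R B i.+1 *m A.

Lemma foldr_mul s A : foldr fstep A s = foldr fstep 1%:M s *m A.
Proof. by elim: s => [|i s IH] /=; rewrite ?mul1mx // IH /fstep mulmxA. Qed.

Lemma Mlr_split l m r : (l <= m <= r)%N -> Mlr R B l r = Mlr R B l m *m Mlr R B m r.
Proof.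
move=> /andP [lm mr]; rewrite /Mlr.
have -> : (r - l = (m - l) + (r - m))%N by lia.
rewrite iotaD foldr_cat foldr_mul; congr (_ *m _); congr (foldr _ _ (iota _ _)); lia.
Qed.

Lemma Mlr_one l : Mlr R B l l.+1 = Mi R B l.+1.
Proof. by rewrite /Mlr subSnn /= mulmx1. Qed.

Lemma Mlr_D n l r y : regular_robp n B -> (r <= n)%N ->
  0 <= Dfun (Mlr R B l r) y /\ 0 <= Dfun (Mlr R B l r)^T y.
Proof.
move=> reg rn; rewrite /Mlr.
have : forall i, i \in iota l (r - l) -> (1 <= i.+1 <= n)%N.
  by move=> i; rewrite mem_iota => /andP [h1 h]; apply/andP; split => //; lia.
elim: (iota l (r - l)) y => [|i s IH] y hs /=.
  by rewrite /Dfun mul1mx trmx1 mul1mx subrr.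
have hi := hs i (mem_head _ _).
have hs' : forall j, j \in s -> (1 <= j.+1 <= n)%N.
  by move=> j js; apply: hs; rewrite in_cons js orbT.
have M0 := @Mi_ge0 i.+1; have Rw := @Mi_row i.+1; have Cl := fun v => @Mi_col n i.+1 v reg hi.
split.
- rewrite Dfun_mul; apply: addr_ge0; first by case: (IH y hs').
  apply: contraction => // [u|v]; by rewrite ?Rw ?Cl.
- rewrite Dfun_trmul; apply: addr_ge0; last by case: (IH ((Mi R B i.+1)^T *m y) hs').
  apply: contractionT => // [u|v]; by rewrite ?Rw ?Cl.
Qed.


Lemma bfZl c x A y : bf (c *: x) A y = c * bf x A y.
Proof. by rewrite /bf linearZ /= -!scalemxAl mxE. Qed.

Lemma sv_norm a W Wt y : sv_approx a W Wt -> 0 < a -> (forall x, 0 <= Dfun W^T x) ->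
  sqnorm ((Wt - W) *m y) <= a ^+ 2 * Dfun W y.
Proof.
move=> sv a0 DT.
set z := (Wt - W) *m y.
have H := sv (a^-1 *: z) y; rewrite -/(bf _ _ _) bfZl bf_self -/z DfunZ in H.
have Hz := Dfun_le W^T z; have Hz0 := DT z.
have s0 := sqnorm_ge0 z.
have ai : a * a^-1 = 1 by rewrite mulfV // gt_eqF.
have ai0 : 0 < a^-1 by rewrite invr_gt0.
have H2 : a^-1 * sqnorm z <= a * ((a^-1 ^+ 2 * Dfun W^T z + Dfun W y) / 2).
  by apply: le_trans H; apply: ler_norm.
rewrite expr2 in H2 *.
have H3 : a * (a^-1 * sqnorm z) <= a * (a * ((a^-1 * a^-1 * Dfun W^T z + Dfun W y) / 2)).
  by rewrite ler_pM2l.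
have E1 : a * (a^-1 * sqnorm z) = sqnorm z by rewrite mulrA ai mul1r.
have E2 : a * (a * ((a^-1 * a^-1 * Dfun W^T z + Dfun W y) / 2)) =
   (Dfun W^T z + a * a * Dfun W y) / 2.
  by field; rewrite gt_eqF.
rewrite E1 E2 in H3; lra.
Qed.

Lemma sv_cross a b W1 W2 A Bm x y :
  sv_approx a W1 A -> sv_approx b W2 Bm -> 0 < a -> 0 < b ->
  (forall x, 0 <= Dfun W2^T x) ->
  `|bf x ((A - W1) *m (Bm - W2)) y| <= a * b * ((Dfun W1^T x + Dfun W2 y) / 2).
Proof.
move=> s1 s2 a0 b0 DT.
rewrite bf_mulr; set z := (Bm - W2) *m y.
have Hz := @sv_norm b W2 Bm y s2 b0 DT; rewrite -/z in Hz.
have H := s1 (b *: x) z; rewrite -/(bf _ _ _) bfZl DfunZ normrM gtr0_norm // in H.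
have H1 := Dfun_le W1 z.
have H4 : b * `|bf x (A - W1) z| <= b * (a * b * ((Dfun W1^T x + Dfun W2 y) / 2)).
  apply: le_trans H _.
  have -> : b * (a * b * ((Dfun W1^T x + Dfun W2 y) / 2)) =
     a * ((b ^+ 2 * Dfun W1^T x + b ^+ 2 * Dfun W2 y) / 2) by rewrite expr2; ring.
  apply: ler_wpM2l; [lra|]; apply: ler_wpM2r; [lra|]; lra.
by rewrite ler_pM2l in H4.
Qed.


Lemma bf_expand x y W1 W2 A Bm :
  bf x (A *m Bm) y = bf x (W1 *m W2) y + bf x ((A - W1) *m W2) y
     + bf x (W1 *m (Bm - W2)) y + bf x ((A - W1) *m (Bm - W2)) y.
Proof.
have -> : A *m Bm = (W1 + (A - W1)) *m (W2 + (Bm - W2)).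
  by rewrite [W1 + _]addrC [W2 + _]addrC !subrK.
rewrite mulmxDl !mulmxDr !bfD; ring.
Qed.

Lemma rec_step k (W1 W2 : 'M[R]_w) (As Bs : nat -> 'M[R]_w) (a : nat -> R) :
  (1 <= k)%N ->
  (forall i, (i <= k)%N -> 0 < a i) ->
  (forall i, (i <= k)%N -> sv_approx (a i) W1 (As i)) ->
  (forall i, (i <= k)%N -> sv_approx (a i) W2 (Bs i)) ->
  (forall v, 0 <= Dfun W1 v /\ 0 <= Dfun W1^T v) ->
  (forall v, 0 <= Dfun W2 v /\ 0 <= Dfun W2^T v) ->
  sv_approx (a k + \sum_(i < k.+1) a i * a (k - i)%N + \sum_(i < k) a i * a (k.-1 - i)%N)
    (W1 *m W2)
    (\sum_(i < k.+1) (As i *m Bs (k - i)%N) - \sum_(i < k) (As i *m Bs (k.-1 - i)%N)).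
Proof.
move=> k1 apos s1 s2 D1 D2 x y.
rewrite -/(bf _ _ _).
set DT := Dfun (W1 *m W2)^T x; set D := Dfun (W1 *m W2) y.
set Q := (DT + D) / 2.
have Q1 : forall i j, (i <= k)%N -> (j <= k)%N ->
    `|bf x ((As i - W1) *m (Bs j - W2)) y| <= a i * a j * Q.
  move=> i j ik jk.
  apply: le_trans (sv_cross _ _ _ _ _ _ x y (s1 i ik) (s2 j jk) (apos i ik) (apos j jk) (fun v => (D2 v).2)) _.
  apply: ler_wpM2l; first by apply: mulr_ge0; apply: ltW; apply: apos.
  rewrite /Q /DT /D Dfun_trmul Dfun_mul.
  have := (D2 (W1^T *m x)).2; have := (D1 (W2 *m y)).1; lra.
have Q0 : `|bf x ((As k - W1) *m W2) y + bf x (W1 *m (Bs k - W2)) y| <= a k * Q.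
  rewrite bf_mulr bf_mull.
  have h1 := s1 k (leqnn k) x (W2 *m y); have h2 := s2 k (leqnn k) (W1^T *m x) y.
  rewrite -/(bf _ _ _) in h1 h2.
  apply: le_trans (ler_normD _ _) _.
  rewrite /Q /DT /D Dfun_trmul Dfun_mul.
  have := apos k (leqnn k) => ak. lra.
have E : bf x ((\sum_(i < k.+1) (As i *m Bs (k - i)%N) - \sum_(i < k) (As i *m Bs (k.-1 - i)%N))
      - W1 *m W2) y =
   (bf x ((As k - W1) *m W2) y + bf x (W1 *m (Bs k - W2)) y)
   + \sum_(i < k.+1) bf x ((As i - W1) *m (Bs (k - i)%N - W2)) y
   - \sum_(i < k) bf x ((As i - W1) *m (Bs (k.-1 - i)%N - W2)) y.
  rewrite !bfB !bf_sum.
  rewrite (eq_bigr (fun i : 'I_k.+1 => bf x (W1 *m W2) y + bf x ((As i - W1) *m W2) y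
     + bf x (W1 *m (Bs (k - i)%N - W2)) y + bf x ((As i - W1) *m (Bs (k - i)%N - W2)) y));
     last by move=> i _; rewrite (bf_expand _ _ W1 W2).
  rewrite [X in _ - X - _](eq_bigr (fun i : 'I_k => bf x (W1 *m W2) y + bf x ((As i - W1) *m W2) y
     + bf x (W1 *m (Bs (k.-1 - i)%N - W2)) y + bf x ((As i - W1) *m (Bs (k.-1 - i)%N - W2)) y));
     last by move=> i _; rewrite (bf_expand _ _ W1 W2).
  rewrite !big_split /=.
  have e1 : \sum_(i < k.+1) bf x (W1 *m W2) y = bf x (W1 *m W2) y + \sum_(i < k) bf x (W1 *m W2) y.
    by rewrite big_ord_recl.
  have e2 : \sum_(i < k.+1) bf x ((As i - W1) *m W2) y =
      \sum_(i < k) bf x ((As i - W1) *m W2) y + bf x ((As k - W1) *m W2) y.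
    by rewrite big_ord_recr.
  have e3 : \sum_(i < k.+1) bf x (W1 *m (Bs (k - i)%N - W2)) y =
      bf x (W1 *m (Bs k - W2)) y + \sum_(i < k) bf x (W1 *m (Bs (k.-1 - i)%N - W2)) y.
    rewrite big_ord_recl subn0; congr (_ + _); apply: eq_bigr => i _.
    have -> : (k - bump 0 i = k.-1 - i)%N by rewrite /bump /=; lia.
    by [].
  rewrite e1 e2 e3; lra.
rewrite E.
set T0 := bf x ((As k - W1) *m W2) y + _.
set S1 := \sum_(i < k.+1) _; set S2 := \sum_(i < k) _.
have b1 : `|S1| <= (\sum_(i < k.+1) a i * a (k - i)%N) * Q.
  apply: le_trans (ler_norm_sum _ _ _) _; rewrite mulr_suml; apply: ler_sum => i _.
  by apply: Q1; [rewrite -ltnS ltn_ord | rewrite leq_subr].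
have b2 : `|S2| <= (\sum_(i < k) a i * a (k.-1 - i)%N) * Q.
  apply: le_trans (ler_norm_sum _ _ _) _; rewrite mulr_suml; apply: ler_sum => i _.
  apply: Q1; [apply: ltnW; exact: ltn_ord | lia].
have n1 := ler_normB (T0 + S1) S2; have n2 := ler_normD T0 S1.
rewrite !mulrDl; lra.
Qed.

End Aux.

Section Num.
Variable R : realType.

Lemma sum_rev (k : nat) (f : nat -> R) :
  \sum_(i < k.+1) f (k - i)%N = \sum_(i < k.+1) f i.
Proof.
rewrite [RHS](reindex_inj rev_ord_inj) /=; apply: eq_bigr => i _.
by rewrite subSS.
Qed.

Lemma S2_bound n : \sum_(i < n.+1) ((i.+1)%:R ^+ 2 : R)^-1 <= 2 - (n.+1)%:R^-1.
Proof.
elim: n => [|n IH]; first by rewrite big_ord1 expr1n invr1; lra.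
rewrite big_ord_recr /=.
set x : R := (n.+1)%:R.
have x0 : 0 < x by rewrite ltr0Sn.
have -> : (n.+2)%:R = x + 1 :> R by rewrite /x -natr1.
have e : ((x + 1) ^+ 2)^-1 + (x + 1)^-1 - x^-1 = - (x * (x + 1) ^+ 2)^-1.
  field; apply/andP; split; rewrite ?gt_eqF //; lra.
have : 0 <= (x * (x + 1) ^+ 2)^-1.
  by rewrite invr_ge0 mulr_ge0 // ?sqr_ge0 // ltW.
rewrite -/x in IH. move=> h. set s := \sum_(i < n.+1) _. set u := (x * _)^-1 in e h. set v := ((x + 1) ^+ 2)^-1 in e *. set q := (x+1)^-1 in e *. set p := x^-1 in e IH. have IH' : s <= 2 - p by exact: IH. lra.
Qed.

Lemma H_bound n : \sum_(i < n.+1) ((i.+1)%:R : R)^-1 <= (n.+2)%:R / 2.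
Proof.
elim: n => [|n IH]; first by rewrite big_ord1 invr1; lra.
rewrite big_ord_recr /=.
have h : ((n.+2)%:R : R)^-1 <= 2^-1.
  by rewrite lef_pV2 ?posrE ?ltr0Sn // (ler_nat R 2 n.+2).
have e : (n.+3)%:R = (n.+2)%:R + 1 :> R by rewrite natr1.
rewrite e; set s := \sum_(i < n.+1) _.
have IH' : s <= (n.+2)%:R / 2 by exact: IH.
set a : R := (n.+2)%:R in IH' h *; set t := a^-1 in h *.
lra.
Qed.


Definition T (k : nat) : R :=
  \sum_(i < k.+1) (((i.+1)%:R ^+ 2 * ((k - i).+1)%:R ^+ 2)^-1).

Lemma T_bound k : T k * (k.+2)%:R ^+ 2 <= 6.
Proof.
set N : R := (k.+2)%:R.
have N0 : 0 < N by rewrite ltr0Sn.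
have E : T k * N ^+ 2 = \sum_(i < k.+1) (((i.+1)%:R ^+ 2)^-1 + (((k - i).+1)%:R ^+ 2)^-1
      + 2 / N * (((i.+1)%:R)^-1 + (((k - i).+1)%:R)^-1)).
  rewrite /T mulr_suml; apply: eq_bigr => i _.
  have ik : (i <= k)%N by rewrite -ltnS ltn_ord.
  have -> : ((k - i).+1)%:R = N - (i.+1)%:R :> R.
    by rewrite /N -natrB; [congr (_%:R); lia | lia].
  set a : R := (i.+1)%:R.
  have a0 : 0 < a by rewrite ltr0Sn.
  have b0 : 0 < N - a.
    by rewrite subr_gt0 /a /N ltr_nat ltnS ltnS.
  clearbody a N.
  field; rewrite !gt_eqF //.
rewrite E !big_split /= -!mulr_sumr big_split /=.
rewrite (sum_rev k (fun j => ((j.+1)%:R ^+ 2 : R)^-1)) (sum_rev k (fun j => ((j.+1)%:R : R)^-1)).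
have h2 := S2_bound k; have h1 := H_bound k.
have p : 0 <= ((k.+1)%:R : R)^-1 by rewrite invr_ge0 ler0n.
rewrite -/N in h1.
set H := \sum_(i < k.+1) ((i.+1)%:R : R)^-1 in h1 *.
set S := \sum_(i < k.+1) ((i.+1)%:R ^+ 2 : R)^-1 in h2 *.
have hh : H + H <= N by lra.
have : 2 / N * (H + H) <= 2 / N * N.
  by apply: ler_wpM2l => //; rewrite mulr_ge0 // invr_ge0 ltW.
rewrite divfK ?gt_eqF //.
set q := ((k.+1)%:R : R)^-1 in p h2.
move=> hq; set z := 2 / N * (H + H) in hq *; lra.
Qed.


Lemma T_ge0 k : 0 <= T k.
Proof.
apply: sumr_ge0 => i _; rewrite invr_ge0 mulr_ge0 // exprn_ge0 // ler0n.
Qed.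

Lemma eps_prod (g M : R) i j K : (i + j = K)%N -> 0 < M ->
  (g ^+ i.+1 / (10 * (i.+1)%:R ^+ 2 * M)) * (g ^+ j.+1 / (10 * (j.+1)%:R ^+ 2 * M))
  = g ^+ K.+2 / (100 * M ^+ 2) * ((i.+1)%:R ^+ 2 * (j.+1)%:R ^+ 2)^-1.
Proof.
move=> hK M0.
have -> : g ^+ K.+2 = g ^+ i.+1 * g ^+ j.+1 by rewrite -exprD; congr (_ ^+ _); lia.
set a : R := (i.+1)%:R; set b : R := (j.+1)%:R.
have a0 : 0 < a by rewrite ltr0Sn.
have b0 : 0 < b by rewrite ltr0Sn.
clearbody a b.
field; rewrite !gt_eqF //.
Qed.

Definition epsf (g M : R) (i : nat) : R := g ^+ i.+1 / (10 * (i.+1)%:R ^+ 2 * M).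

Lemma num_main (g c M : R) k :
  0 < g -> g < 2^-1 -> 0 < c -> c <= 1 -> 0 < M -> (1 <= k)%N ->
  let eps := epsf g M in
  c * eps k + \sum_(i < k.+1) (c * eps i) * (c * eps (k - i)%N)
    + \sum_(i < k) (c * eps i) * (c * eps (k.-1 - i)%N)
  <= c * (1 + M^-1) * eps k.
Proof.
move=> g0 g1 c0 c1 M0; case: k => [//|k'] _ /=; set eps := epsf g M.
set k := k'.+1.
have e1 : \sum_(i < k.+1) (c * eps i) * (c * eps (k - i)%N)
     = c ^+ 2 * (g ^+ k.+2 / (100 * M ^+ 2)) * T k.
  rewrite /T !mulr_sumr; apply: eq_bigr => i _.
  have ik : (i <= k)%N by rewrite -ltnS ltn_ord.
  rewrite /eps /epsf mulrACA (@eps_prod g M i (k - i) k); [by rewrite expr2 !mulrA | lia | by []].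
have e2 : \sum_(i < k) (c * eps i) * (c * eps (k.-1 - i)%N)
     = c ^+ 2 * (g ^+ k.+1 / (100 * M ^+ 2)) * T k'.
  rewrite /T !mulr_sumr; apply: eq_bigr => i _.
  have ik : (i <= k')%N by rewrite -ltnS ltn_ord.
  rewrite /eps /epsf mulrACA (@eps_prod g M i (k.-1 - i) k'); [by rewrite expr2 !mulrA | by rewrite /k /= subnKC | by []].
rewrite e1 e2.
set K : R := (k.+1)%:R.
have K0 : 0 < K by rewrite ltr0Sn.
have hY := T_bound k'; rewrite -/K in hY.
have hX : T k * K ^+ 2 <= 6.
  apply: le_trans (T_bound k).
  apply: ler_wpM2l; first exact: T_ge0.
  by rewrite lerXn2r ?nnegrE ?ler0n // ler_nat.
have X0 : 0 <= T k * K ^+ 2 by rewrite mulr_ge0 ?T_ge0 ?exprn_ge0 // ltW.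
have Y0 : 0 <= T k' * K ^+ 2 by rewrite mulr_ge0 ?T_ge0 ?exprn_ge0 // ltW.
set G := g ^+ k.+1.
have G0 : 0 < G by rewrite exprn_gt0.
have -> : g ^+ k.+2 = G * g by rewrite /G exprSr.
have E : c * (1 + M^-1) * eps k -
   (c * eps k + c ^+ 2 * (G * g / (100 * M ^+ 2)) * T k + c ^+ 2 * (G / (100 * M ^+ 2)) * T k')
   = c * G / (100 * M ^+ 2 * K ^+ 2) * (10 - c * (g * (T k * K ^+ 2) + T k' * K ^+ 2)).
  rewrite /eps /epsf -/G -/K.
  clearbody G K.
  field; rewrite !gt_eqF //.
rewrite -subr_ge0 E.
apply: mulr_ge0.
  apply: divr_ge0; first by rewrite mulr_ge0 // ltW.
  by rewrite !mulr_ge0 // ?exprn_ge0 // ltW.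
set X := T k * K ^+ 2 in hX X0 *; set Y := T k' * K ^+ 2 in hY Y0 *.
have p1 : 0 <= (2^-1 - g) * X by rewrite mulr_ge0 // subr_ge0 ltW.
have p2 : 0 <= (1 - c) * (g * X + Y) by rewrite mulr_ge0 // ?subr_ge0 // addr_ge0 // mulr_ge0 // ltW.
lra.
Qed.

End Num.

Lemma pow_le3 (R : realType) (m t : nat) : (1 <= m)%N -> (t <= m)%N ->
  (1 + (m%:R : R)^-1) ^+ t <= 3.
Proof.
move=> m1 tm.
set x : R := (m%:R)^-1.
have x0 : 0 <= x by rewrite invr_ge0 ler0n.
have h1 : (1 + x) ^+ t <= (1 + x) ^+ m.
  by apply: ler_weXn2l => //; lra.
apply: le_trans h1 _.
have h2 : (1 + x) ^+ m <= expR x ^+ m.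
  by rewrite lerXn2r ?nnegrE ?expR_ge0 ?expR_ge1Dx //; lra.
apply: le_trans h2 _.
have -> : expR x ^+ m = expR 1.
  by rewrite -expRM_natl /x mulfV // pnatr_eq0 -lt0n.
have h3 : (1 - 6^-1) ^+ 6 <= expR (- 6^-1) ^+ 6 :> R.
  apply: lerXn2r; [rewrite nnegrE; lra | by rewrite nnegrE expR_ge0 | ].
  by have := expR_ge1Dx (- 6^-1 : R); lra.
rewrite -expRM_natl in h3.
have e6 : (6%:R * - 6^-1 : R) = -1 by rewrite mulrN mulfV // pnatr_eq0.
rewrite e6 in h3.
rewrite expRN in h3.
have e0 := expR_gt0 (1 : R).
have : (1 - 6^-1) ^+ 6 * expR 1 <= (expR 1)^-1 * expR 1 :> R.
  by apply: ler_wpM2r => //; exact: ltW.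
rewrite mulVf ?lt0r_neq0 //.
set E := expR 1 in e0 *.
have y3 : 26/45 <= (1 - 6^-1) ^+ 3 :> R by rewrite !exprS expr0; lra.
have y6 : (26/45) * (26/45) <= (1 - 6^-1) ^+ 6 :> R.
  have -> : (1 - 6^-1) ^+ 6 = (1 - 6^-1) ^+ 3 * (1 - 6^-1) ^+ 3 :> R by rewrite -exprD.
  apply: ler_pM; [lra | lra | exact: y3 | exact: y3].
set Y := (1 - 6^-1) ^+ 6 in y6 *.
move=> h.
have p : 0 <= (Y - (26/45) * (26/45)) * E by rewrite mulr_ge0 ?subr_ge0 // ltW.
lra.
Qed.


Lemma sv_mono (R : realType) w a b (W Wt : 'M[R]_w) :
  sv_approx a W Wt -> a <= b -> (forall x, 0 <= Dfun W^T x) -> (forall y, 0 <= Dfun W y) ->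
  sv_approx b W Wt.
Proof.
move=> sv ab DT D x y; apply: le_trans (sv x y) _.
apply: ler_wpM2r => //; apply: divr_ge0 => //; exact: addr_ge0.
Qed.

Lemma BS_half n l r t : in_BS n l r -> (r - l = 2 ^ t.+1)%N ->
  let mid := ((l + r) %/ 2)%N in
  [/\ in_BS n l mid, in_BS n mid r, (mid - l = 2 ^ t)%N, (r - mid = 2 ^ t)%N & (l <= mid <= r)%N].
Proof.
case=> i [kk [hl [hr hlr]]] hd mid.
have e2 : (2 ^ t.+1 = 2 * 2 ^ t)%N by rewrite expnS.
set p := (2 ^ t)%N in e2 *.
have hp : (0 < p)%N by rewrite expn_gt0.
have hl' : l = (i * (2 * p))%N by rewrite hl -e2 -hd hr addKn.
have hm : mid = (l + p)%N by rewrite /mid; lia.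
split.
- exists (2 * i)%N, t; rewrite -/p; split; first by rewrite hl'; lia.
  split; first by []. lia.
- exists (2 * i).+1, t; rewrite -/p; split; first by rewrite hm hl'; nia.
  split; lia.
- lia.
- lia.
- apply/andP; split; lia.
Qed.

Theorem lemma4p5 (R : realType) (w n m : nat) (B : nat -> 'I_w -> bool -> 'I_w)
  (Mt : nat -> nat -> nat -> 'M[R]_w) (gamma : R) :
  n = (2 ^ m)%N -> (1 <= m)%N ->
  regular_robp n B ->
  0 < gamma -> gamma < 2^-1 ->
  let eps := fun i : nat => gamma ^+ i.+1 / (10 * (i.+1)%:R ^+ 2 * m%:R) in
  let C := fun t : nat => (1 + m%:R^-1) ^+ t / 3 in
  (* level 0: SV approximations of the true products *)
  (forall l r, in_BS n l r -> sv_approx (eps 0%N / 3) (Mlr R B l r) (Mt 0%N l r)) ->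
  (* recursion, length 1 *)
  (forall k l r, in_BS n l r -> (r - l = 1)%N -> (1 <= k)%N -> Mt k l r = Mi R B r) ->
  (* recursion, length >= 2 *)
  (forall k l r, in_BS n l r -> (2 <= r - l)%N -> (1 <= k)%N ->
     let mid := ((l + r) %/ 2)%N in
     Mt k l r = \sum_(i < k.+1) (Mt i l mid *m Mt (k - i)%N mid r)
              - \sum_(i < k) (Mt i l mid *m Mt (k.-1 - i)%N mid r)) ->
  forall k l r, in_BS n l r ->
    sv_approx (C (trunc_log 2 (r - l)) * eps k) (Mlr R B l r) (Mt k l r).
Proof.
move=> hn m1 reg g0 g1 eps C H0 H1 H2.
have Dn : forall l r, (r <= n)%N ->
    (forall y, 0 <= Dfun (Mlr R B l r) y) /\ (forall y, 0 <= Dfun (Mlr R B l r)^T y).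
  by move=> l r rn; split=> y; case: (@Mlr_D R w B n l r y reg rn).
have M0 : 0 < (m%:R : R) by rewrite ltr0n.
have eps0 : forall i, 0 < eps i.
  move=> i; rewrite /eps divr_gt0 ?exprn_gt0 // !mulr_gt0 // ?exprn_gt0 // ltr0Sn.
have C1 : forall t, 1 <= (1 + (m%:R : R)^-1) ^+ t.
  by move=> t; apply: exprn_ege1; rewrite lerDl invr_ge0 ltW.
have C0 : forall t, 0 < C t by move=> t; rewrite /C divr_gt0 //; apply: lt_le_trans (C1 t).
have Cle : forall t, (t <= m)%N -> C t <= 1.
  by move=> t tm; rewrite /C ler_pdivrMr // mul1r; apply: pow_le3.
have main : forall t k l r, in_BS n l r -> (r - l = 2 ^ t)%N ->
    sv_approx (C t * eps k) (Mlr R B l r) (Mt k l r).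
  elim=> [|t IH] k l r hBS hd.
  - case: k => [|k].
      have -> : C 0%N * eps 0%N = eps 0%N / 3 by rewrite /C expr0 mul1r mulrC.
      exact: H0.
    have hr : r = l.+1 by move: hd; rewrite expn0; case: hBS => ? [? [_ [_ ?]]]; lia.
    rewrite H1 //.
    rewrite hr Mlr_one => x y; rewrite subrr mulmx0 mul0mx mxE normr0.
    have rn : (l.+1 <= n)%N by case: hBS => ? [? [_ [_ ?]]]; lia.
    case: (Dn l l.+1 rn); rewrite Mlr_one => Da Db.
    apply: mulr_ge0; first by apply: mulr_ge0; apply: ltW.
    by apply: divr_ge0 => //; apply: addr_ge0.
  have rn : (r <= n)%N by case: hBS => ? [? [_ [_ ?]]]; lia.
  have [Dr DrT] := Dn l r rn.
  have tm : (t.+1 <= m)%N.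
    have : (2 ^ t.+1 <= 2 ^ m)%N by rewrite -hd -hn; lia.
    by rewrite leq_exp2l.
  case: (@BS_half n l r t hBS hd) => hL hR dL dR hmid.
  set mid := ((l + r) %/ 2)%N in hL hR dL dR hmid.
  case: k => [|k].
    apply: sv_mono (H0 l r hBS) _ DrT Dr.
    rewrite mulrC ler_pM2r // /C -[X in X <= _]mul1r ler_pM2r ?invr_gt0 //; exact: C1.
  have -> : Mt k.+1 l r = \sum_(i < k.+2) (Mt i l mid *m Mt (k.+1 - i)%N mid r)
              - \sum_(i < k.+1) (Mt i l mid *m Mt (k.+1.-1 - i)%N mid r).
    by rewrite (H2 k.+1 l r hBS) //; rewrite hd expnS; lia.
  have midn : (mid <= n)%N by move/andP: hmid => [_ ?]; lia.
  have RS := @rec_step R w k.+1 (Mlr R B l mid) (Mlr R B mid r)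
     (fun i => Mt i l mid) (fun i => Mt i mid r) (fun i => C t * eps i) isT
     (fun i _ => mulr_gt0 (C0 t) (eps0 i))
     (fun i _ => IH i l mid hL dL) (fun i _ => IH i mid r hR dR)
     (fun v => conj ((Dn l mid midn).1 v) ((Dn l mid midn).2 v))
     (fun v => conj ((Dn mid r rn).1 v) ((Dn mid r rn).2 v)).
  rewrite -(@Mlr_split R w B l mid r hmid) /= in RS.
  apply: sv_mono RS _ DrT Dr.
  have NM : C t * eps k.+1 + \sum_(i < k.+2) (C t * eps i) * (C t * eps (k.+1 - i)%N)
    + \sum_(i < k.+1) (C t * eps i) * (C t * eps (k.+1.-1 - i)%N)
    <= C t * (1 + (m%:R)^-1) * eps k.+1
    by exact: (@num_main R gamma (C t) m%:R k.+1 g0 g1 (C0 t) (Cle t (ltnW tm)) M0 isT).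
  apply: le_trans NM _.
  by rewrite /C exprSr [_ / 3 * _]mulrAC.
move=> k l r hBS.
have [i [kk [hl [hr hlr]]]] := id hBS.
have hd : (r - l = 2 ^ kk)%N by rewrite hr addKn.
by rewrite hd trunc_expnK //; apply: main.
Qed.
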